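(* GTDS is co-recursively-enumerable, i.e., the set of GTDS instances that have no solution is recursively enumerable.
   Context: An instance of GTDS consists of a rational discount factor $0<\lambda<1$, a rational target $t$, and rational weights $a_1,\dots,a_k$ ($k\in\mathbb N$); a solution is an infinite sequence $w\in\{a_1,\dots,a_k\}^\omega$ with $\sum_{i=0}^\infty w(i)\lambda^i=t$. *)

(* Defs.v *)
From HB Require Import structures.
From mathcomp Require Import all_boot all_order all_algebra.
From mathcomp Require Import all_classical all_reals all_analysis.
From mathcomp Require Import Rstruct Rstruct_topology.

Set Implicit Arguments.
Unset Strict Implicit.
Unset Printing Implicit Defensive.
Import Order.TTheory GRing.Theory Num.Theory.
Import numFieldNormedType.Exports.
Local Open Scope classical_set_scope.
Local Open Scope ring_scope.

Definition gtds_solution (lam t : rat) (ws : seq rat) (w : nat -> rat) : Prop :=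
  (forall i, w i \in ws) /\
  ((fun n => \sum_(0 <= i < n) (ratr (w i) * ratr lam ^+ i : Rdefinitions.R)) @ \oo
     --> (ratr t : Rdefinitions.R)).

Definition gtds_has_solution (lam t : rat) (ws : seq rat) : Prop :=
  exists w : nat -> rat, gtds_solution lam t ws w.

(* Untyped syntax of primitive recursive functions, evaluated on argument lists
   (missing arguments default to 0). *)
Inductive PR : Type :=
| PRzero : PR
| PRsucc : PR
| PRproj : nat -> PR
| PRcomp : PR -> list PR -> PR
| PRrec  : PR -> PR -> PR.         (* h(0,xs) = f xs ; h(m+1,xs) = g(m, h(m,xs), xs) *)

Fixpoint pr_eval (p : PR) (xs : seq nat) {struct p} : nat :=
  match p with
  | PRzero => 0%N
  | PRsucc => (head 0%N xs).+1
  | PRproj i => nth 0%N xs i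
  | PRcomp f gs =>
      pr_eval f ((fix evs (l : list PR) : seq nat :=
                    match l with
                    | nil => [::]
                    | cons g l' => pr_eval g xs :: evs l'
                    end) gs)
  | PRrec f g =>
      let rest := behead xs in
      nat_rect (fun _ => nat) (pr_eval f rest)
               (fun m acc => pr_eval g [:: m, acc & rest]) (head 0%N xs)
  end.

(* A set of naturals is recursively enumerable iff it is the projection of a
   primitive recursive relation (Kleene normal form). *)
Definition re_set (P : nat -> Prop) : Prop :=
  exists p : PR, forall x : nat, P x <-> exists n : nat, pr_eval p [:: n; x] = 0%N.

Definition nat_pair (a b : nat) : nat := ((a + b) * (a + b).+1) %/ 2 + b.

Definition code_int (z : int) : nat :=
  match z with Posz n => n.*2 | Negz n => n.*2.+1 end.

Definition code_rat (q : rat) : nat := nat_pair (code_int (numq q)) (code_int (denq q)).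

Fixpoint code_seq (s : seq rat) : nat :=
  match s with [::] => 0%N | q :: s' => (nat_pair (code_rat q) (code_seq s')).+1 end.

Definition code_instance (lam t : rat) (ws : seq rat) : nat :=
  nat_pair (code_rat lam) (nat_pair (code_rat t) (code_seq ws)).

Definition gtds_code (x : nat) : Prop :=
  exists lam t ws, 0 < lam < 1 /\ x = code_instance lam t ws.

Definition gtds_no_solution_set (x : nat) : Prop :=
  exists lam t ws, 0 < lam < 1 /\ x = code_instance lam t ws /\
                   ~ gtds_has_solution lam t ws.

(* Main.v *)
Require Import Defs.
From HB Require Import structures.
From mathcomp Require Import all_boot all_order all_algebra.
From mathcomp Require Import all_classical all_reals all_analysis.
From mathcomp Require Import Rstruct Rstruct_topology.
From mathcomp Require Import ring lra zify.
From Stdlib Require ClassicalEpsilon Classical_Prop Classical_Pred_Type.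
Set Implicit Arguments.
Unset Strict Implicit.
Unset Printing Implicit Defensive.
Import Order.TTheory GRing.Theory Num.Theory.
Import numFieldNormedType.Exports.

Local Open Scope nat_scope.



Definition PRF (n : nat) (f : seq nat -> nat) : Prop :=
  exists p, forall xs, size xs = n -> pr_eval p xs = f xs.

Lemma PRF_ext n f g : (forall xs, size xs = n -> f xs = g xs) -> PRF n f -> PRF n g.
Proof. by move=> E [p Hp]; exists p => xs Hs; rewrite Hp // E. Qed.

Lemma PRF_proj n i : PRF n (fun xs => nth 0 xs i).
Proof. by exists (PRproj i). Qed.

Lemma PRF_zero n : PRF n (fun _ => 0).
Proof. by exists PRzero. Qed.

Lemma PRF_succ n : PRF n (fun xs => (head 0 xs).+1).
Proof. by exists PRsucc. Qed.

Lemma pr_eval_comp f gs xs :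
  pr_eval (PRcomp f gs) xs = pr_eval f (map (fun g => pr_eval g xs) gs).
Proof.
by [].
Qed.

Lemma PRF_comp n m F Gs : PRF m F -> size Gs = m -> List.Forall (PRF n) Gs ->
  PRF n (fun xs => F (map (fun g => g xs) Gs)).
Proof.
move=> [pf Hf] HGs HF.
have [ps Hps] : exists ps, size ps = size Gs /\ forall xs, size xs = n ->
   map (fun g => pr_eval g xs) ps = map (fun g => g xs) Gs.
  elim: HF {HGs} => [|g l [pg Hg] _ [ps [Hs Hps]]]; first by exists [::].
  exists (pg :: ps); split; first by rewrite /= Hs.
  by move=> xs Hxs /=; rewrite Hg // Hps.
exists (PRcomp pf ps) => xs Hxs.
by rewrite pr_eval_comp (proj2 Hps) // Hf // size_map HGs.
Qed.

Lemma PRF_rec n F G : PRF n F -> PRF n.+2 G ->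
  PRF n.+1 (fun xs => nat_rect (fun _ => nat) (F (behead xs))
               (fun m acc => G [:: m, acc & behead xs]) (head 0 xs)).
Proof.
move=> [pf Hf] [pg Hg]; exists (PRrec pf pg) => xs Hxs /=.
rewrite Hf; last by rewrite size_behead Hxs.
elim: (head 0 xs) => //= k ->.
by rewrite Hg //= size_behead Hxs.
Qed.


Local Open Scope nat_scope.


Lemma Forall_projs n l : List.Forall (PRF n) (map (fun i xs => nth 0 xs i) l).
Proof. by elim: l => [|i l IH] /=; constructor => //; apply: PRF_proj. Qed.

Lemma PRF_comp1 n F g : PRF 1 F -> PRF n g -> PRF n (fun xs => F [:: g xs]).
Proof.
move=> HF Hg; have := @PRF_comp n 1 F [:: g] HF erefl.
by apply; constructor.
Qed.

Lemma PRF_comp2 n F g h : PRF 2 F -> PRF n g -> PRF n h ->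
  PRF n (fun xs => F [:: g xs; h xs]).
Proof.
move=> HF Hg Hh; have := @PRF_comp n 2 F [:: g; h] HF erefl.
by apply; constructor => //; constructor.
Qed.

Lemma map_nth_iota (xs : seq nat) : [seq nth 0 xs i | i <- iota 0 (size xs)] = xs.
Proof. exact: (mkseq_nth 0 xs). Qed.

Lemma PRF_cons n F A : PRF n.+1 F -> PRF n A -> PRF n (fun xs => F (A xs :: xs)).
Proof.
move=> HF HA.
have := @PRF_comp n n.+1 F (A :: map (fun i xs => nth 0 xs i) (iota 0 n)) HF.
rewrite /= size_map size_iota => /(_ erefl).
move=> H; apply: PRF_ext (H _); last by constructor => //; apply: Forall_projs.
move=> xs Hxs /=; rewrite -map_comp /comp /=; congr (F (_ :: _)).
by rewrite -Hxs map_nth_iota.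
Qed.

Lemma nth_shift1 (a : nat) xs k m :
  [seq nth 0 (a :: xs) i | i <- iota k.+1 m] = [seq nth 0 xs i | i <- iota k m].
Proof. by elim: m k => //= m IH k; rewrite IH. Qed.

Lemma PRF_drop0 n F : PRF n.+1 F -> PRF n.+2 (fun ys => F (behead ys)).
Proof.
move=> HF.
have := @PRF_comp n.+2 n.+1 F (map (fun i xs => nth 0 xs i) (iota 1 n.+1)) HF.
rewrite size_map size_iota => /(_ erefl (Forall_projs _ _)).
apply: PRF_ext => -[|a xs] //= [Hxs]; rewrite -map_comp /comp /= nth_shift1.
by rewrite -[in RHS](map_nth_iota xs) Hxs.
Qed.

Lemma PRF_shift n F : PRF n.+1 F -> PRF n.+2 (fun ys => F (head 0 ys :: behead (behead ys))).
Proof.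
move=> HF.
have := @PRF_comp n.+2 n.+1 F (map (fun i xs => nth 0 xs i) (0 :: iota 2 n)) HF.
rewrite size_map /= size_iota => /(_ erefl (List.Forall_cons _ (PRF_proj _ 0) (Forall_projs _ _))).
apply: PRF_ext => -[|a [|b xs]] //= [Hxs]; rewrite -map_comp /comp /= !nth_shift1.
by rewrite -[in RHS](map_nth_iota xs) Hxs.
Qed.

Lemma PRF_nrec n A B G :
  PRF n A -> PRF n B ->
  PRF n.+2 (fun ys => G (head 0 ys) (head 0 (behead ys)) (behead (behead ys))) ->
  PRF n (fun xs => nat_rect (fun _ => nat) (B xs) (fun m acc => G m acc xs) (A xs)).
Proof.
move=> HA HB HG.
exact: (PRF_cons (PRF_rec HB HG) HA).
Qed.

Lemma PRF_h0 n : PRF n (fun ys => head 0 ys).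
Proof. by apply: PRF_ext (PRF_proj n 0) => -[]. Qed.
Lemma PRF_hb1 n : PRF n (fun ys => head 0 (behead ys)).
Proof. by apply: PRF_ext (PRF_proj n 1) => -[|a [|b l]]. Qed.
Lemma PRF_hb2 n : PRF n (fun ys => head 0 (behead (behead ys))).
Proof. by apply: PRF_ext (PRF_proj n 2) => -[|a [|b [|c l]]]. Qed.
Lemma PRF_hb3 n : PRF n (fun ys => head 0 (behead (behead (behead ys)))).
Proof. by apply: PRF_ext (PRF_proj n 3) => -[|a [|b [|c [|d l]]]]. Qed.
Lemma PRF_nb1 n i : PRF n (fun ys => nth 0 (behead ys) i).
Proof. by apply: PRF_ext (PRF_proj n i.+1) => -[|a l] //=; rewrite nth_nil. Qed.
Lemma PRF_nb2 n i : PRF n (fun ys => nth 0 (behead (behead ys)) i).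
Proof. by apply: PRF_ext (PRF_proj n i.+2) => -[|a [|b l]] //=; rewrite nth_nil. Qed.
Lemma PRF_nb3 n i : PRF n (fun ys => nth 0 (behead (behead (behead ys))) i).
Proof. by apply: PRF_ext (PRF_proj n i.+3) => -[|a [|b [|c l]]] //=; rewrite nth_nil. Qed.
Lemma PRF_nb4 n i : PRF n (fun ys => nth 0 (behead (behead (behead (behead ys)))) i).
Proof. by apply: PRF_ext (PRF_proj n i.+4) => -[|a [|b [|c [|d l]]]] //=; rewrite nth_nil. Qed.
Lemma PRF_nb5 n i : PRF n (fun ys => nth 0 (behead (behead (behead (behead (behead ys))))) i).
Proof. by apply: PRF_ext (PRF_proj n i.+4.+1) => -[|a [|b [|c [|d [|e l]]]]] //=; rewrite nth_nil. Qed.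

Lemma PRF_S n g : PRF n g -> PRF n (fun xs => (g xs).+1).
Proof. by move=> Hg; apply: (PRF_comp1 (PRF_succ 1) Hg). Qed.

Lemma PRF_const n c : PRF n (fun _ => c).
Proof. elim: c => [|c IH]; [exact: PRF_zero | exact: PRF_S]. Qed.

Lemma PRF_add2 : PRF 2 (fun xs => nth 0 xs 0 + nth 0 xs 1).
Proof.
have H := @PRF_nrec 2 (fun xs => nth 0 xs 0) (fun xs => nth 0 xs 1)
   (fun m acc xs => acc.+1) (PRF_proj _ _) (PRF_proj _ _) (PRF_S (PRF_hb1 _)).
apply: PRF_ext H => xs _ /=; elim: (nth 0 xs 0) => //= k ->; by rewrite addSn.
Qed.

Lemma PRF_add n f g : PRF n f -> PRF n g -> PRF n (fun xs => f xs + g xs).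
Proof. by move=> Hf Hg; apply: (PRF_comp2 PRF_add2 Hf Hg). Qed.

Lemma PRF_mul2 : PRF 2 (fun xs => nth 0 xs 0 * nth 0 xs 1).
Proof.
have H := @PRF_nrec 2 (fun xs => nth 0 xs 0) (fun _ => 0)
   (fun m acc xs => acc + nth 0 xs 1) (PRF_proj _ _) (PRF_zero _)
   (PRF_add (PRF_hb1 _) (PRF_nb2 _ 1)).
apply: PRF_ext H => xs _ /=; elim: (nth 0 xs 0) => //= k ->.
by rewrite mulSn addnC.
Qed.

Lemma PRF_mul n f g : PRF n f -> PRF n g -> PRF n (fun xs => f xs * g xs).
Proof. by move=> Hf Hg; apply: (PRF_comp2 PRF_mul2 Hf Hg). Qed.

Lemma PRF_sub2 : PRF 2 (fun xs => nth 0 xs 0 - nth 0 xs 1).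
Proof.
have Hp : PRF 1 (fun xs => (nth 0 xs 0).-1).
  have H := @PRF_nrec 1 (fun xs => nth 0 xs 0) (fun _ => 0)
   (fun m acc xs => m) (PRF_proj _ _) (PRF_zero _) (PRF_h0 _).
  by apply: PRF_ext H => xs _ /=; case: (nth 0 xs 0).
have H := @PRF_nrec 2 (fun xs => nth 0 xs 1) (fun xs => nth 0 xs 0)
   (fun m acc xs => acc.-1) (PRF_proj _ _) (PRF_proj _ _)
   (PRF_comp1 Hp (PRF_hb1 _)).
apply: PRF_ext H => xs _ /=; elim: (nth 0 xs 1) => /= [|k ->]; first by rewrite subn0.
by rewrite subnS.
Qed.

Lemma PRF_sub n f g : PRF n f -> PRF n g -> PRF n (fun xs => f xs - g xs).
Proof. by move=> Hf Hg; apply: (PRF_comp2 PRF_sub2 Hf Hg). Qed.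

Lemma b2n_eq0 x : nat_of_bool (x == 0) = 1 - x.
Proof. by case: x. Qed.

Lemma PRF_leq n f g : PRF n f -> PRF n g -> PRF n (fun xs => nat_of_bool (f xs <= g xs)).
Proof.
move=> Hf Hg; apply: PRF_ext (PRF_sub (PRF_const n 1) (PRF_sub Hf Hg)).
by move=> xs _; rewrite -b2n_eq0 subn_eq0.
Qed.

Lemma PRF_andb n f g : PRF n (fun xs => nat_of_bool (f xs)) -> PRF n (fun xs => nat_of_bool (g xs)) ->
   PRF n (fun xs => nat_of_bool (f xs && g xs)).
Proof.
move=> Hf Hg; apply: PRF_ext (PRF_mul Hf Hg).
by move=> xs _; case: (f xs); case: (g xs).
Qed.

Lemma PRF_negb n f : PRF n (fun xs => nat_of_bool (f xs)) -> PRF n (fun xs => nat_of_bool (~~ f xs)).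
Proof.
move=> Hf; apply: PRF_ext (PRF_sub (PRF_const n 1) Hf).
by move=> xs _; case: (f xs).
Qed.

Lemma PRF_orb n f g : PRF n (fun xs => nat_of_bool (f xs)) -> PRF n (fun xs => nat_of_bool (g xs)) ->
   PRF n (fun xs => nat_of_bool (f xs || g xs)).
Proof.
move=> Hf Hg; apply: PRF_ext (PRF_negb (PRF_andb (PRF_negb Hf) (PRF_negb Hg))).
by move=> xs _; case: (f xs); case: (g xs).
Qed.

Lemma PRF_implb n f g : PRF n (fun xs => nat_of_bool (f xs)) -> PRF n (fun xs => nat_of_bool (g xs)) ->
   PRF n (fun xs => nat_of_bool (f xs ==> g xs)).
Proof.
move=> Hf Hg; apply: PRF_ext (PRF_orb (PRF_negb Hf) Hg).
by move=> xs _; case: (f xs); case: (g xs).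
Qed.

Lemma PRF_eqn n f g : PRF n f -> PRF n g -> PRF n (fun xs => nat_of_bool (f xs == g xs)).
Proof.
move=> Hf Hg; apply: PRF_ext (PRF_andb (PRF_leq Hf Hg) (PRF_leq Hg Hf)).
by move=> xs _; rewrite eqn_leq.
Qed.

Lemma PRF_bool n (b : bool) : PRF n (fun _ => nat_of_bool b).
Proof. exact: PRF_const. Qed.

Lemma PRF_if n (P : seq nat -> bool) f g : PRF n (fun xs => nat_of_bool (P xs)) -> PRF n f -> PRF n g ->
  PRF n (fun xs => if P xs then f xs else g xs).
Proof.
move=> HP Hf Hg; apply: PRF_ext (PRF_add (PRF_mul HP Hf) (PRF_mul (PRF_negb HP) Hg)).
by move=> xs _; case: (P xs) => /=; rewrite ?mul1n ?mul0n ?addn0.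
Qed.

Lemma PRF_sum n F B : PRF n.+1 (fun ys => F (head 0 ys) (behead ys)) -> PRF n B ->
  PRF n (fun xs => \sum_(0 <= i < B xs) F i xs).
Proof.
move=> HF HB.
have H := @PRF_nrec n B (fun _ => 0) (fun m acc xs => acc + F m xs) HB (PRF_zero _)
   (PRF_add (PRF_hb1 _) (PRF_shift HF)).
apply: PRF_ext H => xs _ /=; elim: (B xs) => [|k IH]; first by rewrite big_geq.
by rewrite big_nat_recr //= IH.
Qed.

Lemma PRF_prod n F B : PRF n.+1 (fun ys => F (head 0 ys) (behead ys)) -> PRF n B ->
  PRF n (fun xs => \prod_(0 <= i < B xs) F i xs).
Proof.
move=> HF HB.
have H := @PRF_nrec n B (fun _ => 1) (fun m acc xs => acc * F m xs) HB (PRF_const _ _)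
   (PRF_mul (PRF_hb1 _) (PRF_shift HF)).
apply: PRF_ext H => xs _ /=; elim: (B xs) => [|k IH]; first by rewrite big_geq.
by rewrite big_nat_recr //= IH.
Qed.

Lemma PRF_iter n A B G : PRF n.+1 (fun ys => G (head 0 ys) (behead ys)) -> PRF n A -> PRF n B ->
  PRF n (fun xs => iter (A xs) (fun v => G v xs) (B xs)).
Proof.
move=> HG HA HB.
have H := @PRF_nrec n A B (fun m acc xs => G acc xs) HA HB (PRF_drop0 HG).
apply: PRF_ext H => xs _ /=; elim: (A xs) => [|k IH] //=; by rewrite IH.
Qed.

Lemma has_sum (P : pred nat) m : has P (iota 0 m) = (0 < \sum_(0 <= i < m) P i).
Proof.
elim: m => [|m IH]; first by rewrite big_geq.
rewrite big_nat_recr // -[m.+1]addn1 iotaD has_cat IH /= orbF addn_gt0.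
by case: (P m).
Qed.

Lemma PRF_has n F B : PRF n.+1 (fun ys => nat_of_bool (F (head 0 ys) (behead ys))) -> PRF n B ->
  PRF n (fun xs => nat_of_bool (has (fun i => F i xs) (iota 0 (B xs)))).
Proof.
move=> HF HB; apply: PRF_ext (PRF_leq (PRF_const n 1) (PRF_sum HF HB)).
by move=> xs _; rewrite has_sum.
Qed.

Lemma PRF_all n F B : PRF n.+1 (fun ys => nat_of_bool (F (head 0 ys) (behead ys))) -> PRF n B ->
  PRF n (fun xs => nat_of_bool (all (fun i => F i xs) (iota 0 (B xs)))).
Proof.
move=> HF HB; apply: PRF_ext (PRF_negb (PRF_has (F := fun i xs => ~~ F i xs) (PRF_negb HF) HB)).
move=> xs _; congr nat_of_bool; elim: (iota 0 (B xs)) => //= i l IH.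
by rewrite negb_or negbK IH.
Qed.

Ltac prf_step :=
  first [ apply: PRF_proj | apply: PRF_h0 | apply: PRF_hb1 | apply: PRF_hb2 | apply: PRF_hb3
        | apply: PRF_nb1 | apply: PRF_nb2 | apply: PRF_nb3 | apply: PRF_nb4 | apply: PRF_nb5
        | apply: PRF_const | apply: PRF_bool
        | apply: PRF_add | apply: PRF_mul | apply: PRF_sub | apply: PRF_S
        | apply: PRF_leq | apply: PRF_eqn | apply: PRF_andb | apply: PRF_orb | apply: PRF_negb
        | apply: PRF_implb | apply: PRF_if
        | apply: PRF_has | apply: PRF_all | apply: PRF_sum | apply: PRF_prod | apply: PRF_iter ].
Ltac prf := repeat (prf_step; cbv beta).

Lemma test : PRF 2 (fun xs => \sum_(0 <= z < nth 0 xs 0) nat_of_bool ((z.+1) * nth 0 xs 1 <= nth 0 xs 0)).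
Proof. prf. Qed.


Local Open Scope nat_scope.


Lemma sum_lt u s : \sum_(0 <= z < u) (z < s) = minn u s.
Proof.
elim: u => [|u IH]; first by rewrite big_geq // min0n.
rewrite big_nat_recr //= IH; case: (ltnP u s) => H /=; lia.
Qed.

Definition divq u m := \sum_(0 <= z < u) ((z.+1) * m <= u).

Lemma divqE u m : 0 < m -> divq u m = u %/ m.
Proof.
move=> Hm; rewrite /divq.
rewrite (eq_bigr (fun z => nat_of_bool (z < u %/ m))); last by move=> z _; rewrite leq_divRL.
by rewrite sum_lt; apply/minn_idPr; apply: leq_div.
Qed.

Lemma PRF_divn2 : PRF 2 (fun xs => nth 0 xs 0 %/ nth 0 xs 1).
Proof.
apply: (@PRF_ext _ (fun xs => if nth 0 xs 1 == 0 then 0 else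
   \sum_(0 <= z < nth 0 xs 0) ((z.+1) * nth 0 xs 1 <= nth 0 xs 0))).
  move=> xs _; case: eqP => [->|/eqP H]; first by rewrite divn0.
  by rewrite -divqE // lt0n.
prf.
Qed.

Lemma PRF_divn n f g : PRF n f -> PRF n g -> PRF n (fun xs => f xs %/ g xs).
Proof. by move=> Hf Hg; apply: (PRF_comp2 PRF_divn2 Hf Hg). Qed.

Lemma PRF_modn n f g : PRF n f -> PRF n g -> PRF n (fun xs => f xs %% g xs).
Proof.
move=> Hf Hg; apply: PRF_ext (PRF_sub Hf (PRF_mul (PRF_divn Hf Hg) Hg)).
move=> xs _; set u := f xs; set m := g xs.
by rewrite {1}(divn_eq u m) addKn.
Qed.

Lemma PRF_expn n f g : PRF n f -> PRF n g -> PRF n (fun xs => f xs ^ g xs).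
Proof.
move=> Hf Hg.
have H : PRF 2 (fun xs => \prod_(0 <= i < nth 0 xs 1) nth 0 xs 0) by prf.
apply: PRF_ext (PRF_comp2 H Hf Hg) => xs _ /=.
elim: (g xs) => [|k IH]; first by rewrite big_geq.
by rewrite big_nat_recr //= IH expnSr.
Qed.

Lemma PRF_odd n f : PRF n f -> PRF n (fun xs => nat_of_bool (odd (f xs))).
Proof.
move=> Hf; apply: PRF_ext (PRF_modn Hf (PRF_const n 2)).
by move=> xs _; rewrite modn2.
Qed.

Lemma PRF_half n f : PRF n f -> PRF n (fun xs => (f xs)./2).
Proof.
move=> Hf; apply: PRF_ext (PRF_divn Hf (PRF_const n 2)).
by move=> xs _; rewrite divn2.
Qed.

Lemma PRF_pred n f : PRF n f -> PRF n (fun xs => (f xs).-1).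
Proof.
move=> Hf; apply: PRF_ext (PRF_sub Hf (PRF_const n 1)).
by move=> xs _; rewrite subn1.
Qed.

Lemma PRF_minn n f g : PRF n f -> PRF n g -> PRF n (fun xs => minn (f xs) (g xs)).
Proof.
move=> Hf Hg; apply: PRF_ext (PRF_sub Hf (PRF_sub Hf Hg)).
by move=> xs _; rewrite minnE.
Qed.

Ltac prf_step2 :=
  first [ prf_step | apply: PRF_divn | apply: PRF_modn | apply: PRF_expn | apply: PRF_odd
        | apply: PRF_half | apply: PRF_pred ].
Ltac prf2 := repeat (prf_step2; cbv beta).

Definition tri s := (s * s.+1) %/ 2.

Lemma triS s : tri s.+1 = tri s + s.+1.
Proof.
rewrite /tri.
have -> : s.+1 * s.+2 = s.+1 * 2 + s * s.+1 by lia.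
by rewrite divnMDl // addnC.
Qed.

Lemma tri_mono m n : m <= n -> tri m <= tri n.
Proof. by move=> H; rewrite /tri leq_div2r // leq_mul // ltnS. Qed.

Lemma tri_ge s : s <= tri s.
Proof. elim: s => // s IH; rewrite triS; lia. Qed.

Lemma tri_ex x : exists s, tri s <= x < tri s.+1.
Proof.
elim: x => [|x [s /andP [H1 H2]]]; first by exists 0.
case: (ltnP x.+1 (tri s.+1)) => H3.
  by exists s; rewrite H3 andbT; lia.
exists s.+1; rewrite (triS s.+1); apply/andP; split; lia.
Qed.

Definition sfun x := \sum_(0 <= z < x) (tri z.+1 <= x).
Definition snd_ x := x - tri (sfun x).
Definition fst_ x := sfun x - snd_ x.

Lemma sfunE x s : tri s <= x < tri s.+1 -> sfun x = s.
Proof.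
move=> /andP [H1 H2]; rewrite /sfun.
rewrite (eq_bigr (fun z => nat_of_bool (z < s))); last first.
  move=> z _; congr nat_of_bool; case: (ltnP z s) => Hz.
    by apply: leq_trans (tri_mono Hz) H1.
  by apply/negbTE; rewrite -ltnNge; apply: leq_trans H2 (tri_mono _).
rewrite sum_lt; apply/minn_idPr.
exact: leq_trans (tri_ge s) H1.
Qed.

Lemma nat_pairE a b : nat_pair a b = tri (a + b) + b.
Proof. by []. Qed.

Lemma fst_pair a b : fst_ (nat_pair a b) = a.
Proof.
have H : sfun (nat_pair a b) = a + b.
  apply: sfunE; rewrite nat_pairE triS; apply/andP; split; lia.
rewrite /fst_ /snd_ H nat_pairE; lia.
Qed.

Lemma snd_pair a b : snd_ (nat_pair a b) = b.
Proof.
have H : sfun (nat_pair a b) = a + b.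
  apply: sfunE; rewrite nat_pairE triS; apply/andP; split; lia.
rewrite /snd_ H nat_pairE; lia.
Qed.

Lemma pair_surj x : nat_pair (fst_ x) (snd_ x) = x.
Proof.
have [s Hs] := tri_ex x.
have Hsf := sfunE Hs.
move: Hs; rewrite triS => /andP [H1 H2].
rewrite nat_pairE /fst_ /snd_ Hsf.
have -> : s - (x - tri s) + (x - tri s) = s by lia.
lia.
Qed.

Lemma snd_le x : snd_ x <= x.
Proof. exact: leq_subr. Qed.

Lemma PRF_fst n f : PRF n f -> PRF n (fun xs => fst_ (f xs)).
Proof.
move=> Hf; apply: (@PRF_comp1 n (fun ys => fst_ (nth 0 ys 0)) f _ Hf).
rewrite /fst_ /snd_ /sfun /tri; prf2.
Qed.

Lemma PRF_snd n f : PRF n f -> PRF n (fun xs => snd_ (f xs)).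
Proof.
move=> Hf; apply: (@PRF_comp1 n (fun ys => snd_ (nth 0 ys 0)) f _ Hf).
rewrite /snd_ /sfun /tri; prf2.
Qed.

Lemma PRF_pair n f g : PRF n f -> PRF n g -> PRF n (fun xs => nat_pair (f xs) (g xs)).
Proof.
move=> Hf Hg; apply: (@PRF_comp2 n (fun ys => nat_pair (nth 0 ys 0) (nth 0 ys 1)) f g _ Hf Hg).
rewrite /nat_pair; prf2.
Qed.


Local Open Scope nat_scope.


Definition ipos c := if odd c then 0 else c./2.
Definition ineg c := if odd c then (c./2).+1 else 0.
Definition int_of c : int := if odd c then Negz c./2 else Posz c./2.

Lemma int_ofK z : int_of (code_int z) = z.
Proof.
have H n : (n.*2.+1)./2 = n := half_bit_double n true.
case: z => n; rewrite /int_of /=.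
  by rewrite odd_double half_double.
by rewrite odd_double /= uphalf_double.
Qed.

Lemma code_intK c : code_int (int_of c) = c.
Proof.
rewrite /int_of; case Ho: (odd c); have := odd_double_half c; rewrite Ho /= => H.
  by rewrite -[in RHS]H add1n.
by rewrite -[in RHS]H add0n.
Qed.

Lemma int_of_pn c : int_of c = ((ipos c)%:Z - (ineg c)%:Z)%R.
Proof.
by rewrite /int_of /ipos /ineg; case: (odd c); rewrite ?NegzE ?subr0 ?sub0r.
Qed.

Lemma ipos_ineg0 c : ipos c * ineg c = 0.
Proof. by rewrite /ipos /ineg; case: (odd c); rewrite ?muln0. Qed.

Lemma abs_int_of c : `|int_of c|%N = ipos c + ineg c.
Proof. by rewrite /int_of /ipos /ineg; case: (odd c) => //=; rewrite addn0. Qed.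

Definition coprimeb a b := all (fun d => ~~ ((d.+2 %| a) && (d.+2 %| b))) (iota 0 b).

Lemma coprimebE a b : 0 < b -> coprimeb a b = coprime a b.
Proof.
move=> Hb; apply/idP/idP.
  move=> /allP H; rewrite /coprime.
  have Hg0 : 0 < gcdn a b by rewrite gcdn_gt0 Hb orbT.
  have Hgb : gcdn a b <= b by apply: dvdn_leq => //; apply: dvdn_gcdr.
  case: (ltngtP (gcdn a b) 1) => Hg //; first by lia.
  have Hin : gcdn a b - 2 \in iota 0 b by rewrite mem_iota add0n; lia.
  have := H _ Hin; have -> : (gcdn a b - 2).+2 = gcdn a b by lia.
  by rewrite dvdn_gcdl dvdn_gcdr.
move=> Hc; apply/allP => d _; apply/negP => /andP [Ha Hb'].
have : d.+2 %| gcdn a b by rewrite dvdn_gcd Ha Hb'.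
by rewrite (eqP Hc) dvdn1.
Qed.

Definition rvalid r :=
  [&& ~~ odd (snd_ r), 0 < (snd_ r)./2 & coprimeb (ipos (fst_ r) + ineg (fst_ r)) (snd_ r)./2].

Definition rat_of r : rat := ((int_of (fst_ r))%:~R / (int_of (snd_ r))%:~R)%R.

Lemma rvalid_code q : rvalid (code_rat q).
Proof.
rewrite /rvalid /code_rat fst_pair snd_pair.
have Hd := denq_gt0 q.
case E: (denq q) Hd => [d|d] //=; rewrite ltz_nat => Hd.
rewrite odd_double half_double Hd /= coprimebE // -abs_int_of int_ofK.
by move: (coprime_num_den q); rewrite E.
Qed.

Lemma rvalid_rat r : rvalid r -> code_rat (rat_of r) = r.
Proof.
move=> /and3P [Ho Hp Hc].
have Hd : int_of (snd_ r) = Posz (snd_ r)./2 by rewrite /int_of (negbTE Ho).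
have Hcop : coprime `|int_of (fst_ r)| `|int_of (snd_ r)|.
  by rewrite abs_int_of Hd /= -coprimebE.
rewrite /code_rat /rat_of coprimeq_num // coprimeq_den // Hd.
have -> : (Posz (snd_ r)./2 == 0%R) = false by apply/negbTE; rewrite eqz_nat -lt0n.
have -> : Num.sg (Posz (snd_ r)./2) = 1%R by rewrite gtr0_sg // ltz_nat.
rewrite mul1r -Hd.
have -> : `|int_of (snd_ r)|%R = int_of (snd_ r) by rewrite Hd.
by rewrite !code_intK pair_surj.
Qed.

Definition tl c := snd_ c.-1.
Definition hdc c := fst_ c.-1.
Definition el c j := hdc (iter j tl c).
Definition len c := \sum_(0 <= j < c) (iter j tl c != 0).

Lemma snd0 : snd_ 0 = 0.
Proof. by rewrite /snd_. Qed.

Lemma tl0 : tl 0 = 0.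
Proof. by rewrite /tl snd0. Qed.

Lemma iter_tl0 j : iter j tl 0 = 0.
Proof. by elim: j => //= j ->; rewrite tl0. Qed.

Lemma tl_lt c : 0 < c -> tl c < c.
Proof. by move=> Hc; rewrite /tl; apply: leq_ltn_trans (snd_le _) _; lia. Qed.

Lemma tl_cons q s : tl (code_seq (q :: s)) = code_seq s.
Proof. by rewrite /tl /= snd_pair. Qed.

Lemma hdc_cons q s : hdc (code_seq (q :: s)) = code_rat q.
Proof. by rewrite /hdc /= fst_pair. Qed.

Lemma iter_tl_code s j : iter j tl (code_seq s) = code_seq (drop j s).
Proof.
elim: s j => [|q s IH] j; first by rewrite iter_tl0; case: j.
case: j => [|j] //; by rewrite iterSr tl_cons IH.
Qed.

Lemma code_seq_ge s : size s <= code_seq s.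
Proof.
elim: s => //= q s IH; rewrite ltnS; apply: leq_trans IH _.
by rewrite nat_pairE leq_addl.
Qed.

Lemma len_spec c L : (forall j, j < L -> iter j tl c != 0) -> iter L tl c = 0 -> len c = L.
Proof.
move=> H1 H2.
have HE : forall j, (iter j tl c != 0) = (j < L).
  move=> j; case: (ltnP j L) => Hj; first exact: H1.
  by rewrite -(subnK Hj) iterD H2 iter_tl0.
have HL : forall j, j <= L -> iter j tl c + j <= c.
  elim=> [|j IH] Hj; first by rewrite addn0.
  have := H1 j Hj; rewrite -lt0n => /tl_lt.
  rewrite iterS; have := IH (ltnW Hj); lia.
rewrite /len (eq_bigr (fun j => nat_of_bool (j < L))); last by move=> j _; rewrite HE.
rewrite sum_lt; apply/minn_idPr; have := HL L (leqnn L); lia.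
Qed.

Lemma len_ex c : exists L, (forall j, j < L -> iter j tl c != 0) /\ iter L tl c = 0.
Proof.
elim/ltn_ind: c => c IH.
case: (posnP c) => [->|Hc]; first by exists 0.
have [L [H1 H2]] := IH _ (tl_lt Hc).
exists L.+1; split; last by rewrite iterSr.
by case=> [|j] Hj; [rewrite /= -lt0n | rewrite iterSr; apply: H1].
Qed.

Lemma len_code s : len (code_seq s) = size s.
Proof.
apply: len_spec => [j Hj|]; rewrite iter_tl_code.
  have : 0 < size (drop j s) by rewrite size_drop; lia.
  by case: (drop j s).
by rewrite drop_size.
Qed.

Lemma el_code s j : j < size s -> el (code_seq s) j = code_rat (nth 0%R s j).
Proof. by move=> Hj; rewrite /el iter_tl_code (drop_nth 0%R Hj) hdc_cons. Qed.

Lemma len_pos c : 0 < c -> len c = (len (tl c)).+1.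
Proof.
move=> Hc; have [L [H1 H2]] := len_ex (tl c).
rewrite (len_spec H1 H2); apply: len_spec; last by rewrite iterSr.
by case=> [|j] Hj; [rewrite /= -lt0n | rewrite iterSr; apply: H1].
Qed.

Lemma decode_list c : (forall j, j < len c -> rvalid (el c j)) -> exists s : seq rat, code_seq s = c.
Proof.
elim/ltn_ind: c => c IH.
case: (posnP c) => [->|Hc] H; first by exists [::].
have [s Hs] : exists s : seq rat, code_seq s = tl c.
  apply: IH; first exact: tl_lt.
  move=> j Hj; have := H j.+1; rewrite len_pos // ltnS => /(_ Hj).
  by rewrite /el iterSr.
exists (rat_of (hdc c) :: s) => /=.
have H0 := H 0; rewrite len_pos // /el /= in H0.
by rewrite rvalid_rat ?H0 // Hs /hdc /tl pair_surj; lia.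
Qed.

Definition valid x :=
  [&& rvalid (fst_ x), ~~ odd (fst_ (fst_ x)), 0 < (fst_ (fst_ x))./2,
      (fst_ (fst_ x))./2 < (snd_ (fst_ x))./2, rvalid (fst_ (snd_ x)) &
      all (fun j => rvalid (el (snd_ (snd_ x)) j)) (iota 0 (len (snd_ (snd_ x))))].


Local Open Scope nat_scope.


Lemma valid_code lam t ws : (0 < lam < 1)%R -> valid (code_instance lam t ws).
Proof.
move=> /andP [H0 H1].
have Hlt : (numq lam < denq lam)%R.
  have Hd : (0 < (denq lam)%:~R :> rat)%R by rewrite ltr0z denq_gt0.
  by have := H1; rewrite -{1}(divq_num_den lam) ltr_pdivrMr // mul1r ltr_int.
have Hn : (0 < numq lam)%R by rewrite numq_gt0.
rewrite /valid /code_instance !fst_pair !snd_pair !rvalid_code /=.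
rewrite /code_rat ?fst_pair ?snd_pair.
case En: (numq lam) Hn Hlt => [n|n] //; rewrite ltz_nat => Hn.
case Ed: (denq lam) => [d|d]; last by have := denq_gt0 lam; rewrite Ed.
rewrite ltz_nat => Hnd /=.
rewrite odd_double !half_double Hn Hnd /= (rvalid_code t) /=.
apply/allP => j; rewrite mem_iota len_code => /andP [_ Hj].
by rewrite el_code // rvalid_code.
Qed.

Lemma valid_decode x : valid x ->
  exists lam t ws, (0 < lam < 1)%R /\ x = code_instance lam t ws.
Proof.
move=> /and5P [Hl Ho Hp Hpq /andP [Ht Hw]].
have [ws Hws] : exists ws : seq rat, code_seq ws = snd_ (snd_ x).
  apply: decode_list => j Hj; move/allP: Hw; apply; rewrite mem_iota; lia.
exists (rat_of (fst_ x)), (rat_of (fst_ (snd_ x))), ws; split; last first.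
  by rewrite /code_instance !rvalid_rat // Hws !pair_surj.
move: Hl => /and3P [Hd Hd0 _].
rewrite /rat_of /int_of (negbTE Ho) (negbTE Hd).
have Hq : (0 < ((snd_ (fst_ x))./2)%:Z%:~R :> rat)%R by rewrite ltr0z ltz_nat.
apply/andP; split.
  by rewrite divr_gt0 // ltr0z ltz_nat.
by rewrite ltr_pdivrMr // mul1r ltr_int ltz_nat.
Qed.

Definition Pd k (ad : nat -> nat) := \prod_(0 <= i < k) ad i.
Definition Pex k (ad : nat -> nat) j := \prod_(0 <= i < k) (if i == j then 1 else ad i).
Definition dig k u i := (u %/ k ^ i) %% k.
Definition Kc td k (ap an ad : nat -> nat) := \sum_(0 <= j < k) (ap j + an j) * td * Pex k ad j.
Definition Ep p q tp td k (an ad : nat -> nat) N (idx : nat -> nat) :=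
  tp * Pd k ad * q ^ N + \sum_(0 <= i < N) an (idx i) * td * Pex k ad (idx i) * p ^ i * q ^ (N - i).
Definition badg p q tp tn td k (ap an ad : nat -> nat) N idx :=
  let E1 := Ep p q tp td k an ad N idx in
  let E2 := Ep p q tn td k ap ad N idx in
  Kc td k ap an ad * q * p ^ N < (q - p) * ((E1 - E2) + (E2 - E1)).
Definition allbadg p q tp tn td k ap an ad N :=
  all (fun u => badg p q tp tn td k ap an ad N (dig k u)) (iota 0 (k ^ N)).

Definition xp x := (fst_ (fst_ x))./2.
Definition xq x := (snd_ (fst_ x))./2.
Definition xtp x := ipos (fst_ (fst_ (snd_ x))).
Definition xtn x := ineg (fst_ (fst_ (snd_ x))).
Definition xtd x := (snd_ (fst_ (snd_ x)))./2.
Definition xk x := len (snd_ (snd_ x)).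
Definition xap x j := ipos (fst_ (el (snd_ (snd_ x)) j)).
Definition xan x j := ineg (fst_ (el (snd_ (snd_ x)) j)).
Definition xad x j := (snd_ (el (snd_ (snd_ x)) j))./2.
Definition allbadx N x :=
  allbadg (xp x) (xq x) (xtp x) (xtn x) (xtd x) (xk x) (xap x) (xan x) (xad x) N.

Lemma PRF_el n f g : PRF n f -> PRF n g -> PRF n (fun xs => el (f xs) (g xs)).
Proof.
move=> Hf Hg; apply: (@PRF_comp2 n (fun ys => el (nth 0 ys 0) (nth 0 ys 1)) f g _ Hf Hg).
rewrite /el /hdc /tl.
apply: PRF_fst; apply: PRF_pred.
apply: (@PRF_iter 2 (fun xs => nth 0 xs 1) (fun xs => nth 0 xs 0) (fun v xs => snd_ v.-1)).
- by apply: PRF_snd; apply: PRF_pred; apply: PRF_h0.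
- exact: PRF_proj.
- exact: PRF_proj.
Qed.

Lemma PRF_len n f : PRF n f -> PRF n (fun xs => len (f xs)).
Proof.
move=> Hf; apply: (@PRF_comp1 n (fun ys => len (nth 0 ys 0)) f _ Hf).
rewrite /len.
apply: (@PRF_sum 1 (fun j xs => nat_of_bool (iter j tl (nth 0 xs 0) != 0))).
  apply: PRF_negb; apply: PRF_eqn; last exact: PRF_const.
  apply: (@PRF_iter 2 (fun xs => head 0 xs) (fun xs => nth 0 (behead xs) 0) (fun v xs => tl v)).
  - by rewrite /tl; apply: PRF_snd; apply: PRF_pred; apply: PRF_h0.
  - exact: PRF_h0.
  - exact: PRF_nb1.
exact: PRF_proj.
Qed.

Lemma PRF_ipos n f : PRF n f -> PRF n (fun xs => ipos (f xs)).
Proof. by move=> Hf; rewrite /ipos; apply: (@PRF_if n (fun xs => odd (f xs))); [apply: PRF_odd | apply: PRF_const | apply: PRF_half]. Qed.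

Lemma PRF_ineg n f : PRF n f -> PRF n (fun xs => ineg (f xs)).
Proof. by move=> Hf; rewrite /ineg; apply: (@PRF_if n (fun xs => odd (f xs))); [apply: PRF_odd | apply: PRF_S; apply: PRF_half | apply: PRF_const]. Qed.

Ltac prf_step3 :=
  first [ apply: PRF_fst | apply: PRF_snd | apply: PRF_el | apply: PRF_len | apply: PRF_ipos
        | apply: PRF_ineg
        | apply: PRF_proj | apply: PRF_h0 | apply: PRF_hb1 | apply: PRF_hb2 | apply: PRF_hb3
        | apply: PRF_nb1 | apply: PRF_nb2 | apply: PRF_nb3 | apply: PRF_nb4 | apply: PRF_nb5
        | apply: PRF_const | apply: PRF_bool
        | apply: PRF_add | apply: PRF_mul | apply: PRF_sub | apply: PRF_S
        | apply: PRF_divn | apply: PRF_modn | apply: PRF_expn | apply: PRF_odd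
        | apply: PRF_half | apply: PRF_pred
        | apply: PRF_leq | apply: PRF_eqn | apply: PRF_andb | apply: PRF_orb | apply: PRF_negb
        | apply: PRF_implb
        | apply: PRF_has | apply: PRF_all | apply: PRF_sum | apply: PRF_prod | apply: PRF_iter
        | lazymatch goal with |- PRF _ (fun _ => if _ then _ else _) => apply: PRF_if end ].
Ltac prf3 := repeat (prf_step3; cbv beta).

Lemma PRF_rvalid n f : PRF n f -> PRF n (fun xs => nat_of_bool (rvalid (f xs))).
Proof.
move=> Hf; apply: (@PRF_comp1 n (fun ys => nat_of_bool (rvalid (nth 0 ys 0))) f _ Hf).
rewrite /rvalid /coprimeb; prf3.
Qed.

Lemma PRF_valid : PRF 1 (fun xs => nat_of_bool (valid (nth 0 xs 0))).
Proof.
rewrite /valid.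
repeat (first [apply: PRF_rvalid | prf_step3]; cbv beta).
Qed.

Lemma PRF_allbadx : PRF 2 (fun xs => nat_of_bool (allbadx (nth 0 xs 0) (nth 0 xs 1))).
Proof.
rewrite /allbadx /allbadg /badg /Ep /Kc /Pex /Pd /dig /xp /xq /xtp /xtn /xtd /xk /xap /xan /xad.
prf3.
Qed.

Definition Qtest n x := valid x && allbadx n x.

Lemma Qtest_re : exists p : PR, forall n x, pr_eval p [:: n; x] = 0 <-> Qtest n x.
Proof.
have H : PRF 2 (fun xs => nat_of_bool (~~ Qtest (nth 0 xs 0) (nth 0 xs 1))).
  apply: PRF_negb; apply: PRF_andb; last exact: PRF_allbadx.
  exact: (@PRF_comp1 2 _ (fun xs => nth 0 xs 1) PRF_valid (PRF_proj _ _)).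
case: H => p Hp; exists p => n x; rewrite Hp //=.
by case: (Qtest n x).
Qed.


Lemma Pd_gt0 k ad : (forall j, (j < k)%N -> (0 < ad j)%N) -> (0 < Pd k ad)%N.
Proof.
move=> H; rewrite /Pd big_nat_cond; apply: prodn_cond_gt0 => i /andP [/andP [_ Hi] _].
exact: H.
Qed.

Lemma Pd_split k ad j : (j < k)%N -> Pd k ad = (ad j * Pex k ad j)%N.
Proof.
move=> Hj; rewrite /Pd /Pex !big_mkord.
rewrite (bigD1 (Ordinal Hj)) //= [in RHS](bigD1 (Ordinal Hj)) //= eqxx mul1n.
congr (_ * _)%N; apply: eq_bigr => i Hi.
suff -> : (nat_of_ord i == j) = false by [].
apply/negbTE; apply: contra Hi => /eqP Hij; apply/eqP; exact: val_inj.
Qed.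

Lemma Pex_le_K td k ap an ad j : (j < k)%N ->
  ((ap j + an j) * td * Pex k ad j <= Kc td k ap an ad)%N.
Proof.
move=> Hj; rewrite /Kc big_mkord (bigD1 (Ordinal Hj)) //=.
exact: leq_addr.
Qed.

Lemma dig_lt k u i : (0 < k)%N -> (dig k u i < k)%N.
Proof. by move=> Hk; rewrite /dig ltn_pmod. Qed.

Lemma enc k N f : (forall i, (i < N)%N -> (f i < k)%N) ->
  exists u, (u < k ^ N)%N /\ forall i, (i < N)%N -> dig k u i = f i.
Proof.
elim: N f => [|N IH] f Hf; first by exists 0%N.
have Hk : (0 < k)%N by have := Hf 0%N erefl; lia.
have [u' [Hu' Hd]] := IH (fun i => f i.+1) (fun i Hi => Hf i.+1 Hi).
exists (u' * k + f 0%N)%N; split.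
  have := leq_mul (leqnn k) Hu'; rewrite expnS mulnS.
  have := Hf 0%N erefl; lia.
case=> [|i] Hi.
  by rewrite /dig expn0 divn1 modnMDl modn_small //; apply: Hf.
rewrite /dig expnS divnMA divnMDl // (divn_small (Hf 0%N isT)) addn0.
exact: Hd.
Qed.

Lemma Ep_ext p q tp td k an ad N f g :
  (forall i, (i < N)%N -> f i = g i) ->
  Ep p q tp td k an ad N f = Ep p q tp td k an ad N g.
Proof.
move=> H; rewrite /Ep; congr (_ + _)%N; apply: eq_big_nat => i /andP [_ Hi].
by rewrite H.
Qed.

Lemma badg_ext p q tp tn td k ap an ad N f g :
  (forall i, (i < N)%N -> f i = g i) ->
  badg p q tp tn td k ap an ad N f = badg p q tp tn td k ap an ad N g.
Proof.
move=> H; have E1 := Ep_ext p q tp td k an ad H; have E2 := Ep_ext p q tn td k ap ad H.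
unfold badg; cbv zeta; rewrite E1 E2; reflexivity.
Qed.


Local Open Scope ring_scope.

Lemma absB (m n : nat) : ((m - n + (n - m))%N%:R : rat) = `|m%:R - n%:R|.
Proof.
case: (leqP m n) => H.
  have -> : (m - n = 0)%N by apply/eqP; rewrite subn_eq0.
  by rewrite add0n natrB // distrC ger0_norm // subr_ge0 ler_nat.
have E : (n - m = 0)%N by apply/eqP; rewrite subn_eq0; apply: ltnW.
rewrite E addn0 natrB; last exact: ltnW.
rewrite ger0_norm // subr_ge0 ler_nat; exact: ltnW.
Qed.

Lemma term_eq (an ap td Pe ad p q i M N : nat) (wi lam : rat) :
  ad != 0%N -> q != 0%N -> wi = (ap%:R - an%:R) / ad%:R -> lam = p%:R / q%:R -> N = (M + i)%N ->
  an%:R * td%:R * Pe%:R * p%:R ^+ i * q%:R ^+ M - ap%:R * td%:R * Pe%:R * p%:R ^+ i * q%:R ^+ M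
  = - ((td%:R * (ad%:R * Pe%:R)) * q%:R ^+ N * (wi * lam ^+ i)) :> rat.
Proof.
move=> Had Hq -> -> ->.
rewrite exprD expr_div_n.
have Had' : ad%:R != 0 :> rat by rewrite pnatr_eq0.
have Hq' : q%:R != 0 :> rat by rewrite pnatr_eq0.
field.
by rewrite expf_neq0.
Qed.

Definition Cst td k ap an ad (lam : rat) :=
  (Kc td k ap an ad)%:R / ((td * Pd k ad)%N%:R * (1 - lam)).

Section Value.
Variables (lam t : rat) (ws : seq rat) (p q tp tn td : nat) (ap an ad : nat -> nat).
Hypothesis Hpq : (0 < p < q)%N.
Hypothesis Hlam : lam = p%:R / q%:R.
Hypothesis Htd : (0 < td)%N.
Hypothesis Ht : t = (tp%:R - tn%:R) / td%:R.
Hypothesis Hws : forall j, (j < size ws)%N ->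
  nth 0 ws j = ((ap j)%:R - (an j)%:R) / (ad j)%:R /\ (0 < ad j)%N /\ (ap j * an j = 0)%N.

Let k := size ws.

Lemma value N idx : (forall i, (i < N)%N -> (idx i < k)%N) ->
  ~~ badg p q tp tn td k ap an ad N idx =
  (`|t - \sum_(0 <= i < N) nth 0 ws (idx i) * lam ^+ i| <= lam ^+ N * Cst td k ap an ad lam).
Proof.
move=> Hidx.
have HPd : (0 < Pd k ad)%N by apply: Pd_gt0 => j Hj; have := Hws Hj; case=> _ [].
set D : rat := (td * Pd k ad)%N%:R.
set Q : rat := q%:R ^+ N.
set S := \sum_(0 <= i < N) nth 0 ws (idx i) * lam ^+ i.
set K := Kc td k ap an ad.
have HD : 0 < D by rewrite ltr0n muln_gt0 Htd HPd.
have Hq0 : (0 < q)%N by lia.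
have HQ : 0 < Q by rewrite exprn_gt0 // ltr0n.
have E1 : (tp * Pd k ad * q ^ N)%N%:R - (tn * Pd k ad * q ^ N)%N%:R = D * Q * t.
  rewrite /D /Q Ht !natrM !natrX.
  have Htd' : td%:R != 0 :> rat by rewrite pnatr_eq0 -lt0n.
  by field.
have E2 : (\sum_(0 <= i < N) an (idx i) * td * Pex k ad (idx i) * p ^ i * q ^ (N - i))%N%:R
        - (\sum_(0 <= i < N) ap (idx i) * td * Pex k ad (idx i) * p ^ i * q ^ (N - i))%N%:R
        = - (D * Q * S).
  rewrite !natr_sum -sumrB /S mulr_sumr -sumrN; apply: eq_big_nat => i /andP [_ Hi].
  have Hj := Hidx i Hi.
  have [Hw [Had _]] := Hws Hj.
  rewrite !natrM !natrX /D /Q natrM (Pd_split ad Hj) natrM.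
  apply: (@term_eq (an (idx i)) (ap (idx i)) td (Pex k ad (idx i)) (ad (idx i)) p q i (N - i) N) => //.
    by rewrite -lt0n.
    by rewrite -lt0n.
  by rewrite subnK // ltnW.
have HE : (Ep p q tp td k an ad N idx)%:R - (Ep p q tn td k ap ad N idx)%:R = D * Q * (t - S).
  rewrite /Ep !natrD.
  have -> : forall a b c d : rat, a + b - (c + d) = (a - c) + (b - d) by move=> *; ring.
  rewrite E1 E2; ring.
have Hr : lam ^+ N * Cst td k ap an ad lam * (D * Q) = p%:R ^+ N * K%:R * q%:R / (q%:R - p%:R).
  rewrite /Cst /Q Hlam -/D -/K.
  have HD' : D != 0 by rewrite gt_eqF.
  have Hq' : q%:R != 0 :> rat by rewrite pnatr_eq0 -lt0n.
  have Hqp : q%:R - p%:R != 0 :> rat by rewrite subr_eq0 eqr_nat; lia.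
  have H1 : 1 - p%:R / q%:R != 0 :> rat.
    have Hlt : (p%:R / q%:R : rat) < 1 by rewrite ltr_pdivrMr ?ltr0n ?mul1r ?ltr_nat; lia.
    by rewrite subr_eq0 eq_sym (lt_eqF Hlt).
  have HPd' : (Pd k ad)%:R != 0 :> rat by rewrite pnatr_eq0 -lt0n.
  have Htd' : td%:R != 0 :> rat by rewrite pnatr_eq0 -lt0n.
  rewrite expr_div_n; field.
  by rewrite Hqp Hq' HPd' Htd' expf_neq0.
rewrite -(ler_pM2r (mulr_gt0 HD HQ)) Hr.
have -> : `|t - S| * (D * Q) = `|(Ep p q tp td k an ad N idx)%:R - (Ep p q tn td k ap ad N idx)%:R|.
  by rewrite HE normrM (gtr0_norm (mulr_gt0 HD HQ)) mulrC.
have Hqp : 0 < q%:R - p%:R :> rat by rewrite subr_gt0 ltr_nat; lia.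
rewrite ler_pdivlMr // -absB.
rewrite /badg -/K -leqNgt -(ler_nat rat) natrM natrB; last by lia.
rewrite !natrM !natrX.
congr (_ <= _); [by rewrite mulrC | ring].
Qed.

Lemma abs_ws_le a : a \in ws -> `|a| <= (1 - lam) * Cst td k ap an ad lam.
Proof.
move=> /(nthP 0) [j Hj <-].
have [Hw [Had H0]] := Hws Hj.
have HPd : (0 < Pd k ad)%N by apply: Pd_gt0 => i Hi; have := Hws Hi; case=> _ [].
have Hl1 : 1 - lam != 0.
  rewrite Hlam subr_eq0; apply/eqP => H.
  have : (p%:R / q%:R : rat) < 1 by rewrite ltr_pdivrMr ?ltr0n ?mul1r ?ltr_nat; lia.
  by rewrite -H ltxx.
have HD : 0 < (td * Pd k ad)%N%:R :> rat by rewrite ltr0n muln_gt0 Htd HPd.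
have HDne : (td * Pd k ad)%N%:R != 0 :> rat by rewrite gt_eqF.
rewrite [X in _ <= X](_ : _ = (Kc td k ap an ad)%:R / (td * Pd k ad)%N%:R); last first.
  have HPd' : (Pd k ad)%:R != 0 :> rat by rewrite pnatr_eq0 -lt0n.
  have Htd' : td%:R != 0 :> rat by rewrite pnatr_eq0 -lt0n.
  by rewrite /Cst; field; rewrite HPd' Htd' Hl1.
rewrite ler_pdivlMr //.
have -> : `|nth 0 ws j| * (td * Pd k ad)%N%:R = ((ap j + an j) * td * Pex k ad j)%N%:R.
  rewrite Hw (Pd_split ad Hj) !natrM natrD normrM normfV (gtr0_norm (x := (ad j)%:R)) ?ltr0n //.
  have -> : `|(ap j)%:R - (an j)%:R| = (ap j)%:R + (an j)%:R :> rat.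
    by move: H0; case: (ap j) => [|a1]; case: (an j) => [|b1] //= _; rewrite ?subr0 ?sub0r ?normrN ?addr0 ?add0r ?normr_nat.
  have Had' : (ad j)%:R != 0 :> rat by rewrite pnatr_eq0 -lt0n.
  by field.
by rewrite ler_nat; apply: Pex_le_K.
Qed.

Lemma allbad_sem N :
  allbadg p q tp tn td k ap an ad N <->
  ~ exists w : nat -> rat, (forall i, (i < N)%N -> w i \in ws) /\
      `|t - \sum_(0 <= i < N) w i * lam ^+ i| <= lam ^+ N * Cst td k ap an ad lam.
Proof.
split.
  move=> /allP Hall [w [Hw Hgood]].
  have Hidx : forall i, (i < N)%N -> (index (w i) ws < k)%N by move=> i Hi; rewrite index_mem Hw.
  have [u [Hu Hdig]] := enc Hidx.
  have := Hall u; rewrite mem_iota add0n Hu => /(_ isT).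
  rewrite (badg_ext _ _ _ _ _ _ _ _ _ Hdig) => Hb.
  suff : ~~ badg p q tp tn td k ap an ad N (fun i => index (w i) ws) by rewrite Hb.
  rewrite value //.
  rewrite (@eq_big_nat _ _ _ 0 N _ (fun i => w i * lam ^+ i)) // => i /andP [_ Hi].
  by rewrite nth_index // Hw.
move=> Hno; apply/allP => u; rewrite mem_iota add0n => /andP [_ Hu].
apply/negPn/negP => Hb; apply: Hno.
have Hd : forall i, (i < N)%N -> (dig k u i < k)%N.
  move=> i Hi; apply: dig_lt; case: (posnP k) Hu => [->|//]; rewrite exp0n //; lia.
exists (fun i => nth 0 ws (dig k u i)); split.
  by move=> i Hi; apply: mem_nth; apply: Hd.
by rewrite -value.
Qed.

End Value.


Local Open Scope classical_set_scope.
Local Open Scope ring_scope.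


Notation RR := Rdefinitions.R.

Lemma cvg_nat_lt (R : realType) (u : nat -> R) (l : R) : (u @ \oo --> l) ->
  forall e : R, 0 < e -> exists N, forall n, (N <= n)%N -> `|l - u n| < e.
Proof.
move=> H e He.
have : \forall n \near \oo, `|l - u n| < e by exact: (proj1 (cvgrPdist_lt u l) H).
by move=> [N _ HN]; exists N => n Hn; apply: HN.
Qed.

Lemma nat_lt_cvg (R : realType) (u : nat -> R) (l : R) :
  (forall e : R, 0 < e -> exists N, forall n, (N <= n)%N -> `|l - u n| < e) -> (u @ \oo --> l).
Proof.
move=> H; apply: (proj2 (cvgrPdist_lt u l)) => e He.
by have [N HN] := H e He; exists N.
Qed.

Section F1.
Variables (lam t C : rat) (ws : seq rat).
Hypothesis Hlam : 0 < lam < 1.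
Hypothesis Hws : forall a, a \in ws -> `|a| <= (1 - lam) * C.

Lemma eqle (x y : rat) : x = y -> x <= y.
Proof. by move=> ->. Qed.

Definition Sr (w : nat -> rat) n := \sum_(0 <= i < n) w i * lam ^+ i.

Lemma SrS w n : Sr w n.+1 = Sr w n + w n * lam ^+ n.
Proof. by rewrite /Sr big_nat_recr. Qed.

Lemma lam_ge0 : 0 <= lam.
Proof. by case/andP: Hlam => /ltW. Qed.

Lemma lam_lt1 : lam < 1.
Proof. by case/andP: Hlam. Qed.

Lemma C_ge0 a : a \in ws -> 0 <= C.
Proof.
move=> /Hws H; have H1 : 0 < 1 - lam by rewrite subr_gt0 lam_lt1.
have : 0 <= (1 - lam) * C by apply: le_trans H.
by rewrite pmulr_rge0.
Qed.

Lemma tail_bound w N d : (forall i, w i \in ws) ->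
  `|Sr w (N + d) - Sr w N| <= C * (lam ^+ N - lam ^+ (N + d)).
Proof.
move=> Hw; elim: d => [|d IH]; first by rewrite addn0 subrr normr0 subrr mulr0.
rewrite addnS SrS.
have Hp : 0 <= lam ^+ (N + d) by rewrite exprn_ge0 // lam_ge0.
have H2 : `|w (N + d) * lam ^+ (N + d)| <= (1 - lam) * C * lam ^+ (N + d).
  by rewrite normrM (ger0_norm Hp) ler_wpM2r // Hws.
have H1 := ler_normD (Sr w (N + d) - Sr w N) (w (N + d) * lam ^+ (N + d)).
have -> : Sr w (N + d) + w (N + d) * lam ^+ (N + d) - Sr w N
   = Sr w (N + d) - Sr w N + w (N + d) * lam ^+ (N + d) by ring.
apply: le_trans H1 _; apply: le_trans (lerD IH H2) _.
rewrite exprS; apply: eqle; ring.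
Qed.

Lemma sum_ratr (R : realType) (w : nat -> rat) :
  (fun n => \sum_(0 <= i < n) (ratr (w i) * ratr lam ^+ i : R)) = (fun n => ratr (Sr w n)).
Proof.
apply: funext => n; rewrite /Sr rmorph_sum; apply: eq_bigr => i _.
by rewrite rmorphM rmorphXn.
Qed.

Lemma sol_bound (R : realType) w N : (forall i, w i \in ws) ->
  ((fun n => (ratr (Sr w n) : R)) @ \oo --> (ratr t : R)) ->
  `|t - Sr w N| <= lam ^+ N * C.
Proof.
move=> Hw Hc; rewrite leNgt; apply/negP => Hlt.
have HC := C_ge0 (Hw 0%N).
set eps := `|t - Sr w N| - lam ^+ N * C.
have Heps : 0 < eps by rewrite subr_gt0.
have Heps' : 0 < (ratr eps : R) by rewrite ltr0q.
have [N0 HN0] := cvg_nat_lt Hc Heps'.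
have := HN0 (N0 + N)%N (leq_addr _ _); rewrite -rmorphB -ratr_norm ltr_rat => Hn.
have Htb := tail_bound N N0 Hw; rewrite addnC in Htb.
have Hd := ler_distD (Sr w (N0 + N)) t (Sr w N).
have Hp : 0 <= lam ^+ (N0 + N) by rewrite exprn_ge0 // lam_ge0.
have HCp : 0 <= C * lam ^+ (N0 + N) by rewrite mulr_ge0.
rewrite -/eps in Hn.
have : `|t - Sr w N| < `|t - Sr w N| .
  apply: le_lt_trans Hd _.
  rewrite distrC [X in X + _ < _]distrC.
  have E : `|t - Sr w N| = eps + lam ^+ N * C by rewrite /eps; ring.
  rewrite [X in _ < X]E.
  have : `|Sr w (N0 + N) - Sr w N| <= lam ^+ N * C.
    by apply: le_trans Htb _; rewrite mulrBr mulrC lerBlDr lerDl.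
  move=> H; exact: ltr_leD Hn H.
by rewrite ltxx.
Qed.

Lemma conv (R : realType) w : (forall N, `|t - Sr w N| <= lam ^+ N * C) ->
  ((fun n => (ratr (Sr w n) : R)) @ \oo --> (ratr t : R)).
Proof.
move=> Hb.
have HC : 0 <= C by have := Hb 0%N; rewrite expr0 mul1r; apply: le_trans.
apply: nat_lt_cvg => e He.
have Hl : `|ratr lam : R| < 1.
  rewrite -ratr_norm ger0_norm ?lam_ge0 //.
  by have := lam_lt1; rewrite -(ltr_rat R) rmorph1.
have HC1 : 0 < (ratr C : R) + 1 by rewrite ltr_wpDl // ler0q.
have He' : 0 < e / ((ratr C : R) + 1) by rewrite divr_gt0.
have [N0 HN0] := cvg_nat_lt (cvg_expr Hl) He'.
exists N0 => n /HN0; rewrite sub0r normrN => Hn.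
rewrite -rmorphB -ratr_norm.
have H1 : (ratr `|t - Sr w n| : R) <= ratr (lam ^+ n * C) by rewrite ler_rat.
apply: le_lt_trans H1 _.
rewrite rmorphM rmorphXn.
have Hpos : 0 <= (ratr lam : R) ^+ n by rewrite exprn_ge0 // ler0q lam_ge0.
rewrite -(ger0_norm Hpos) in Hn *.
have H2 : `|(ratr lam : R) ^+ n| * ratr C <= `|ratr lam ^+ n| * ((ratr C : R) + 1).
  by rewrite ler_wpM2l // lerDl.
apply: le_lt_trans H2 _.
by rewrite normr_id in Hn; rewrite -ltr_pdivlMr.
Qed.

Definition good N (w : nat -> rat) :=
  (forall i, (i < N)%N -> w i \in ws) /\ `|t - Sr w N| <= lam ^+ N * C.

Lemma Sr_ext N w w' : (forall i, (i < N)%N -> w i = w' i) -> Sr w N = Sr w' N.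
Proof. by move=> H; rewrite /Sr; apply: eq_big_nat => i /andP [_ Hi]; rewrite (H i Hi). Qed.

Lemma good_ext N w w' : (forall i, (i < N)%N -> w i = w' i) -> good N w -> good N w'.
Proof.
move=> H [H1 H2]; split; first by move=> i Hi; rewrite -(H i Hi); apply: H1.
by rewrite -(Sr_ext H).
Qed.

Lemma good_prefix N w : good N.+1 w -> good N w.
Proof.
move=> [H1 H2]; split; first by move=> i Hi; apply: H1; apply: ltnW.
have Hp : 0 <= lam ^+ N by rewrite exprn_ge0 // lam_ge0.
have H3 : `|w N * lam ^+ N| <= (1 - lam) * C * lam ^+ N.
  by rewrite normrM (ger0_norm Hp) ler_wpM2r // Hws // H1.
rewrite SrS in H2.
have Hd := ler_normD (t - (Sr w N + w N * lam ^+ N)) (w N * lam ^+ N).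
have -> : t - Sr w N = t - (Sr w N + w N * lam ^+ N) + w N * lam ^+ N by ring.
apply: le_trans Hd _; apply: le_trans (lerD H2 H3) _.
rewrite exprS; apply: eqle; ring.
Qed.

Lemma good_le N M w : (N <= M)%N -> good M w -> good N w.
Proof.
move=> /subnK <-; elim: (M - N)%N => [|d IH] //.
by rewrite addSn => /good_prefix.
Qed.

Definition extb n (f : nat -> rat) :=
  forall m, exists g, (forall i, (i < n)%N -> g i = f i) /\ good (n + m) g.

Definition upd (f : nat -> rat) n a := fun i => if i == n then a else f i.

Lemma ext_step n f : extb n f -> exists a, extb n.+1 (upd f n a).
Proof.
move=> Hf; apply: Classical_Prop.NNPP => Hno.
have Hm : forall a, exists m, forall g, (forall i, (i < n.+1)%N -> g i = upd f n a i) ->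
    ~ good (n.+1 + m) g.
  move=> a; have := Classical_Pred_Type.not_ex_all_not _ _ Hno a.
  move=> /Classical_Pred_Type.not_all_ex_not [m Hm]; exists m => g Hg Hgood; apply: Hm.
  by exists g.
pose mm a := proj1_sig (ClassicalEpsilon.constructive_indefinite_description _ (Hm a)).
have Hmm a := proj2_sig (ClassicalEpsilon.constructive_indefinite_description _ (Hm a)).
set M := \max_(a <- ws) mm a.
have [g [Hg Hgood]] := Hf M.+1.
have Hgn : g n \in ws by case: Hgood => H _; apply: H; rewrite addnS ltnS leq_addr.
apply: (Hmm (g n) g).
  move=> i Hi; rewrite /upd; case: eqP => [->|Hne] //.
  by apply: Hg; move: Hi; rewrite ltnS leq_eqVlt => /orP [/eqP //|].
apply: good_le Hgood; rewrite addSn -addnS leq_add2l ltnS.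
exact: (@leq_bigmax_seq _ ws xpredT mm (g n) Hgn isT).
Qed.

Hypothesis Hall : forall N, exists w, good N w.

Lemma ext0 f : extb 0 f.
Proof. by move=> m; have [w Hw] := Hall m; exists w; split. Qed.

Definition pick (f : nat -> rat) n : rat :=
  ClassicalEpsilon.epsilon (inhabits 0) (fun a => extb n.+1 (upd f n a)).

Fixpoint fs n : nat -> rat :=
  match n with 0 => fun _ => 0 | n'.+1 => upd (fs n') n' (pick (fs n') n') end.

Lemma fs_ext n : extb n (fs n).
Proof.
elim: n => [|n IH]; first exact: ext0.
exact: (ClassicalEpsilon.epsilon_spec (inhabits 0) _ (ext_step IH)).
Qed.

Lemma fs_stable m i : (i < m)%N -> fs m i = fs i.+1 i.
Proof.
elim: m => [//|m IH]; rewrite ltnS leq_eqVlt => /orP [/eqP ->//|Hi].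
by rewrite /= /upd (ltn_eqF Hi) IH.
Qed.

Lemma koenig : exists w, forall N, good N w.
Proof.
exists (fun i => fs i.+1 i) => N.
have [g [Hg Hgood]] := fs_ext N 0.
rewrite addn0 in Hgood.
apply: good_ext Hgood => i Hi; rewrite Hg //; exact: fs_stable.
Qed.

End F1.

Lemma F1 (lam t C : rat) (ws : seq rat) : 0 < lam < 1 ->
  (forall a, a \in ws -> `|a| <= (1 - lam) * C) ->
  gtds_has_solution lam t ws <->
  forall N, exists w : nat -> rat, (forall i, (i < N)%N -> w i \in ws) /\
     `|t - \sum_(0 <= i < N) w i * lam ^+ i| <= lam ^+ N * C.
Proof.
move=> Hlam Hws; split.
  move=> [w [Hw Hc]] N; exists w; split => //.
  rewrite sum_ratr in Hc.
  exact: (sol_bound (R := RR) Hlam Hws N Hw Hc).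
move=> Hall.
have [w Hw] := koenig Hlam Hws Hall.
exists w; split.
  by move=> i; have [H _] := Hw i.+1; apply: H.
rewrite sum_ratr; apply: (conv (R := RR) Hlam) => N.
by have [_ H] := Hw N; exact: H.
Qed.


Local Open Scope ring_scope.


Lemma rat_code_eq q :
  q = ((ipos (fst_ (code_rat q)))%:R - (ineg (fst_ (code_rat q)))%:R) / ((snd_ (code_rat q))./2)%:R
  /\ (0 < (snd_ (code_rat q))./2)%N.
Proof.
rewrite /code_rat (fst_pair (code_int (numq q))) (snd_pair (code_int (numq q))).
have E : (numq q)%:~R = ((ipos (code_int (numq q)))%:R - (ineg (code_int (numq q)))%:R :> rat).
  by rewrite -{1}(int_ofK (numq q)) int_of_pn rmorphB.
have Hd := denq_gt0 q.
case Ed: (denq q) Hd => [d|d] //; rewrite ltz_nat => Hd.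
rewrite /= half_double; split => //.
by rewrite -E -{1}(divq_num_den q) Ed.
Qed.

Lemma data_ok lam t ws : 0 < lam < 1 ->
  let x := code_instance lam t ws in
  xk x = size ws /\
  [/\ (0 < xp x < xq x)%N, lam = (xp x)%:R / (xq x)%:R, (0 < xtd x)%N,
      t = ((xtp x)%:R - (xtn x)%:R) / (xtd x)%:R &
      forall j, (j < size ws)%N -> nth 0 ws j = ((xap x j)%:R - (xan x j)%:R) / (xad x j)%:R
         /\ (0 < xad x j)%N /\ (xap x j * xan x j = 0)%N].
Proof.
move=> Hlam x.
have Hv := valid_code t ws Hlam.
have Hx1 : fst_ x = code_rat lam by rewrite /x /code_instance fst_pair.
have Hx2 : snd_ x = nat_pair (code_rat t) (code_seq ws) by rewrite /x /code_instance snd_pair.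
move: Hv; rewrite -/x /valid => /and5P [_ Hev Hp Hpq _].
have [Hl Hq] := rat_code_eq lam.
have [Ht Htd] := rat_code_eq t.
rewrite /xp /xq /xtp /xtn /xtd /xk /xap /xan /xad Hx1 Hx2 (fst_pair (code_rat t)) (snd_pair (code_rat t)).
rewrite Hx1 in Hev Hp Hpq.
split; first by rewrite len_code.
split => //.
- by rewrite Hp Hpq.
- by rewrite {1}Hl /ipos /ineg (negbTE Hev) subr0.
move=> j Hj; rewrite el_code //.
have [Hw Hd] := rat_code_eq (nth 0 ws j).
by split => //; split => //; apply: ipos_ineg0.
Qed.

Theorem theorem21_main : re_set gtds_no_solution_set.
Proof.
have [pr Hpr] := Qtest_re.
exists pr => x; split.
  move=> [lam [t [ws [Hlam [Hx Hno]]]]].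
  have [H5 [H1 H2 H3 H4 H6]] := data_ok t ws Hlam.
  rewrite -Hx in H1 H2 H3 H4 H5 H6.
  have Habs := abs_ws_le H1 H2 H3 H6.
  have HF := F1 t Hlam Habs.
  have [N HN] : exists N, ~ exists w : nat -> rat, (forall i, (i < N)%N -> w i \in ws) /\
     `|t - \sum_(0 <= i < N) w i * lam ^+ i| <= lam ^+ N * Cst (xtd x) (size ws) (xap x) (xan x) (xad x) lam.
    apply: Classical_Prop.NNPP => Hn; apply: Hno; apply/HF => N.
    apply: Classical_Prop.NNPP => Hn2; apply: Hn; by exists N.
  exists N; apply/Hpr; rewrite /Qtest Hx valid_code //= -Hx.
  rewrite /allbadx H5.
  by apply/(allbad_sem H1 H2 H3 H4 H6).
move=> [N /Hpr /andP [Hv Hb]].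
have [lam [t [ws [Hlam Hx]]]] := valid_decode Hv.
exists lam, t, ws; split => //; split => //.
have [H5 [H1 H2 H3 H4 H6]] := data_ok t ws Hlam.
rewrite -Hx in H1 H2 H3 H4 H5 H6.
have Habs := abs_ws_le H1 H2 H3 H6.
move/(F1 t Hlam Habs) => HF.
move: Hb; rewrite /allbadx H5 => /(allbad_sem H1 H2 H3 H4 H6 N); apply.
exact: HF.
Qed.



Theorem theorem21 : re_set gtds_no_solution_set.
Proof. exact: theorem21_main. Qed.
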